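(* Let $n,m\in\mathbb{N}_0$. Then $L_n^{(m)}(1)=0$ if and only if $n=1$ and $m=0$.
   Context: Generalized Laguerre polynomials: $L_n^{(\alpha)}(x)=\sum_{j=0}^n(-1)^j\binom{n+\alpha}{n-j}\frac{x^j}{j!}$. *)

(* Defs.v *)
From mathcomp Require Import all_boot all_algebra.
Set Implicit Arguments. Unset Strict Implicit. Unset Printing Implicit Defensive.
Import GRing.Theory Num.Theory.
Local Open Scope ring_scope.

Definition laguerre (n m : nat) (x : rat) : rat :=
  \sum_(0 <= j < n.+1) (-1) ^+ j * ('C(n + m, n - j))%:R * x ^+ j / (j`!)%:R.

(* Main.v *)
Require Import Defs.
From mathcomp Require Import all_boot all_algebra.
From mathcomp Require Import zify ring lra.
Import GRing.Theory Num.Theory.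
Local Open Scope ring_scope.

Lemma t (k : nat) (z : int) : -1 + (k.+2)%:Z * z = 0 -> False.
Proof. move=> H. have : (0 < z) || (z <= 0) by lia. case/orP=> ?; nia. Qed.
Lemma t2 (k : nat) (z : int) : 1 + (k.+2)%:Z * z = 0 -> False.
Proof. move=> H. have : (0 <= z) || (z < 0) by lia. case/orP=> ?; nia. Qed.

Lemma key (k m : nat) :
  laguerre k.+2 m 1 * (k.+2`!)%:R =
  (-1) ^+ k.+2 + (k.+2)%:R * ((\sum_(0 <= j < k.+2) (-1) ^+ j *
       ('C(k.+2 + m, k.+2 - j) * k.+1 ^_ (k.+1 - j))%:Z) : int)%:~R.
Proof.
rewrite /laguerre big_nat_recr //= subnn bin0 expr1n.
rewrite mulrDl addrC; congr (_ + _).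
  have h1 : ((k.+2)`!)%:R != 0 :> rat by rewrite pnatr_eq0 -lt0n fact_gt0.
  by field.
rewrite rmorph_sum big_distrl big_distrr /=.
apply: eq_big_nat => j /andP[_ hj].
rewrite expr1n rmorphM /= rmorph_sign.
have hf : (k.+2`! = k.+2 * (k.+1 ^_ (k.+1 - j) * j`!))%N.
  rewrite factS; congr (_ * _)%N.
  have hj' : (j <= k.+1)%N by lia.
  rewrite -{2}(subKn hj') ffact_fact //; lia.
rewrite hf !natrM /=.
have h0 : (j`!)%:R != 0 :> rat by rewrite pnatr_eq0 -lt0n fact_gt0.
rewrite -pmulrn natrM.
field.
exact: h0.
Qed.

Theorem proposition2 (n m : nat) :
  laguerre n m 1 = 0 <-> (n = 1%N /\ m = 0%N).
Proof.
case: n => [|[|k]].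
- rewrite /laguerre big_nat1 /= bin0 !expr0 fact0; split; last by case.
  move=> h; exfalso; move: h; lra.
- rewrite /laguerre !big_nat_recr //= big_nil.
  rewrite subn0 subnn bin0 add1n bin1 /=.
  rewrite !expr0 expr1 !expr1n fact0 /= -natr1.
  rewrite (_ : 1`! = 1)%N //.
  rewrite ?mulr1n.
  rewrite !invr1 !mulr1 !mul1r add0r.
  split; last by case=> _ ->; rewrite mulr0n add0r addrN.
  by rewrite addrK => /eqP; rewrite pnatr_eq0 => /eqP.
- split; last by case.
  move=> h; exfalso.
  have := key k m; rewrite h mul0r.
  set z := (\sum_(_ <= _ < _) _)%R.
  have -> : (-1) ^+ k.+2 + (k.+2)%:R * z%:~R = ((-1) ^+ k.+2 + (k.+2)%:Z * z)%:~R :> rat.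
    by rewrite rmorphD rmorphM /= rmorph_sign.
  move/esym/eqP; rewrite intr_eq0 -signr_odd.
  case: (odd k.+2) => /=; rewrite ?expr1 ?expr0 => /eqP; clearbody z; [exact: t | exact: t2].
Qed.
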